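(* Let $n\ge 3$, let $a_0,\ldots,a_{n-1}$ be indeterminates over $\mathbb{Q}$, $f=x^n+a_{n-1}x^{n-1}+\cdots+a_0$, and let $D_2\in\mathbb{Q}[a_0,\ldots,a_{n-1}]$ be the polynomial obtained by expressing $\prod_{1\le i,j,k\le n,\ i<j,\ j\ne k,\ k\ne i}(2r_k-r_i-r_j)$ ($r_1,\ldots,r_n$ the roots of $f$) in terms of $a_0,\ldots,a_{n-1}$ via Vieta's formulas. Then, in $\mathbb{Q}[a_0,\ldots,a_{n-1},x,y,w]$, \[D_2\in\left\langle f(x),f(y),f\left(\tfrac{x+y}{2}\right),w(x-y)-1\right\rangle\cap\mathbb{Q}[a_0,\ldots,a_{n-1}].\]
   Context: $\langle g_1,\ldots,g_m\rangle$ is the ideal generated by $g_1,\ldots,g_m$. *)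

(* Defs.v *)
From HB Require Import structures.
From mathcomp Require Import all_boot all_order all_algebra.
From mathcomp Require Import mpoly.
Set Implicit Arguments. Unset Strict Implicit. Unset Printing Implicit Defensive.
Import Order.TTheory GRing.Theory Num.Theory.
Local Open Scope ring_scope.

Definition in_ideal (R : comRingType) (m : nat) (g : 'I_m -> R) (p : R) : Prop :=
  exists c : 'I_m -> R, p = \sum_(i < m) c i * g i.

(* Polynomials in the roots r_0,...,r_{n-1}: {mpoly rat[n]}, r_k = 'X_k. *)
(* Vieta substitution: the coefficient variable a_i (i < n) of the monic
   f = x^n + a_{n-1} x^{n-1} + ... + a_0 = prod_k (x - r_k)
   is sent to (-1)^(n-i) e_{n-i}(r_0,...,r_{n-1}). *)
Definition vieta (n : nat) (P : {mpoly rat[n]}) : {mpoly rat[n]} :=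
  P \mPo [tuple ((-1) ^+ (n - i) *: mesym n rat (n - i)) | i < n].

Definition D2roots (n : nat) : {mpoly rat[n]} :=
  \prod_(i < n) \prod_(j < n | (i < j)%N)
     \prod_(k < n | (k != i) && (k != j)) (2%:R *: 'X_k - 'X_i - 'X_j).

Definition var_a (n : nat) (i : 'I_n) : {mpoly rat[n + 3]} := 'X_(lshift 3 i).
Definition var_x (n : nat) : {mpoly rat[n + 3]} := 'X_(rshift n (0 : 'I_3)).
Definition var_y (n : nat) : {mpoly rat[n + 3]} := 'X_(rshift n (1 : 'I_3)).
Definition var_w (n : nat) : {mpoly rat[n + 3]} := 'X_(rshift n (2 : 'I_3)).

Definition embed_a (n : nat) (P : {mpoly rat[n]}) : {mpoly rat[n + 3]} :=
  P \mPo [tuple var_a i | i < n].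

Definition f_at (n : nat) (t : {mpoly rat[n + 3]}) : {mpoly rat[n + 3]} :=
  t ^+ n + \sum_(i < n) var_a i * t ^+ i.

Definition gens (n : nat) (i : 'I_4) : {mpoly rat[n + 3]} :=
  match val i with
  | 0 => f_at (var_x n)
  | 1 => f_at (var_y n)
  | 2 => f_at ((2%:R)^-1 *: (var_x n + var_y n))
  | _ => var_w n * (var_x n - var_y n) - 1
  end.

(* Main.v *)
Require Import Defs.
From HB Require Import structures.
From mathcomp Require Import all_boot all_order all_algebra all_fingroup.
From mathcomp Require Import mpoly.
From mathcomp Require Import ring.
Set Implicit Arguments. Unset Strict Implicit. Unset Printing Implicit Defensive.
Import Order.TTheory GRing.Theory Num.Theory.
Local Open Scope ring_scope.

Lemma mmap_rmorph (n : nat) (R : ringType) (S T : comRingType) (f : R -> S)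
  (h : 'I_n -> S) (g : {rmorphism S -> T}) (p : {mpoly R[n]}) :
  g (mmap f h p) = mmap (g \o f) (g \o h) p.
Proof.
rewrite /mmap rmorph_sum; apply: eq_bigr => m _.
rewrite rmorphM /mmap1 rmorph_prod; congr (_ * _); apply: eq_bigr => i _.
by rewrite rmorphXn.
Qed.

Lemma mmap_ext (n : nat) (R S : ringType) (f1 f2 : R -> S) (h1 h2 : 'I_n -> S)
  (p : {mpoly R[n]}) : f1 =1 f2 -> h1 =1 h2 -> mmap f1 h1 p = mmap f2 h2 p.
Proof.
move=> e1 e2; rewrite /mmap; apply: eq_bigr => m _.
by rewrite e1 (mmap1_eq _ e2).
Qed.

Lemma mmap_mesym (n : nat) (R S : ringType) (T : comRingType)
  (f : {rmorphism R -> T}) (g : {rmorphism S -> T}) (h : 'I_n -> T) k :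
  mmap f h (mesym n R k) = mmap g h (mesym n S k).
Proof.
rewrite !mesymE !raddf_sum /=; apply: eq_bigr => s _.
by rewrite !mmapX.
Qed.

Section Ideal.
Variables (R : comRingType) (m : nat) (g : 'I_m -> R).
Local Notation J := (in_ideal g).

Lemma J0 : J 0.
Proof. by exists (fun _ => 0); rewrite big1 // => i _; rewrite mul0r. Qed.

Lemma JD p q : J p -> J q -> J (p + q).
Proof.
move=> [c ->] [c' ->]; exists (fun i => c i + c' i).
by rewrite -big_split; apply: eq_bigr => i _; rewrite mulrDl.
Qed.

Lemma JMl a p : J p -> J (a * p).
Proof.
move=> [c ->]; exists (fun i => a * c i).
by rewrite mulr_sumr; apply: eq_bigr => i _; rewrite mulrA.
Qed.

Lemma JMr a p : J p -> J (p * a).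
Proof. by rewrite mulrC; apply: JMl. Qed.

Lemma JN p : J p -> J (- p).
Proof. by move=> h; rewrite -mulN1r; apply: JMl. Qed.

Lemma JB p q : J p -> J q -> J (p - q).
Proof. by move=> hp hq; apply: JD => //; apply: JN. Qed.

Lemma Jg i : J (g i).
Proof.
exists (fun j => (j == i)%:R); rewrite (bigD1 i) //= eqxx mul1r big1 ?addr0 //.
by move=> j /negbTE ->; rewrite mul0r.
Qed.

Lemma Jsum (I : Type) (r : seq I) (P : pred I) (F : I -> R) :
  (forall i, P i -> J (F i)) -> J (\sum_(i <- r | P i) F i).
Proof. by move=> h; apply: big_ind => //; [apply: J0 | apply: JD]. Qed.

Lemma Jeq p q : p = q -> J p -> J q.
Proof. by move=> ->. Qed.

Definition Jc (a b : R) := J (a - b).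

Lemma JcM a b a' b' : Jc a a' -> Jc b b' -> Jc (a * b) (a' * b').
Proof.
move=> h1 h2; rewrite /Jc.
have -> : a * b - a' * b' = a * (b - b') + (a - a') * b' by ring.
by apply: JD; [apply: JMl | apply: JMr].
Qed.

Lemma Jcrefl a : Jc a a.
Proof. by rewrite /Jc subrr; apply: J0. Qed.

Lemma JcX a b k : Jc a b -> Jc (a ^+ k) (b ^+ k).
Proof.
move=> h; elim: k => [|k ih]; first by rewrite !expr0; apply: Jcrefl.
by rewrite !exprS; apply: JcM.
Qed.

Lemma Jc_mmap (k : nat) (S : ringType) (f : S -> R) (u v : 'I_k -> R) (P : {mpoly S[k]}) :
  (forall i, Jc (u i) (v i)) -> Jc (mmap f u P) (mmap f v P).
Proof.
move=> h; rewrite /Jc /mmap -sumrB; apply: Jsum => mo _.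
rewrite -mulrBr; apply: JMl.
rewrite /mmap1; apply: (big_ind2 Jc); first exact: Jcrefl.
  by move=> *; apply: JcM.
by move=> i _; apply: JcX.
Qed.

End Ideal.
Lemma divstep (R : comNzRingType) (p : {poly R}) a k : p \is monic -> size p = k.+2 ->
  exists q, [/\ q \is monic, size q = k.+1 & p = q * ('X - a%:P) + (p.[a])%:P].
Proof.
move=> mp sp.
have : root (p - (p.[a])%:P) a by rewrite rootE !hornerE subrr.
case/factor_theorem => q hq.
have sc : (size (- (p.[a])%:P) < size p)%N.
  by rewrite size_opp (leq_ltn_trans (size_polyC_leq1 _)) // sp.
have s1 : size (p - (p.[a])%:P) = k.+2 by rewrite size_addl // sp.
have q0 : q != 0.
  by apply/eqP => q0; move: s1; rewrite hq q0 mul0r size_poly0.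
have sq : size q = k.+1.
  move: s1; rewrite hq size_Mmonic ?monicXsubC // size_XsubC addn2 /=.
  by case.
exists q; split => //.
  apply/monicP; rewrite -(lead_coef_Mmonic q (monicXsubC a)) -hq.
  by rewrite lead_coefDl // (monicP mp).
by rewrite -hq subrK.
Qed.

Section StepA.
Variable d : nat.
Local Notation n := d.+3.
Local Notation RR := {mpoly rat[n + 3]}.
Local Notation J := (in_ideal (gens n)).
Local Notation x := (var_x n).
Local Notation y := (var_y n).
Local Notation w := (var_w n).
Definition midR : RR := (2%:R)^-1 *: (x + y).

Definition Fpoly : {poly RR} := 'X^n + \sum_(i < n) var_a i *: 'X^i.

Lemma size_low : (size (\sum_(i < n) var_a i *: 'X^i : {poly RR})%R <= n)%N.
Proof.
apply: (leq_trans (size_sum _ _ _)); apply/bigmax_leqP => i _.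
by apply: (leq_trans (size_scale_leq _ _)); rewrite size_polyXn.
Qed.

Lemma Fpoly_monic : Fpoly \is monic.
Proof.
apply/monicP; rewrite /Fpoly lead_coefDl ?lead_coefXn //.
by rewrite size_polyXn ltnS size_low.
Qed.

Lemma size_Fpoly : size Fpoly = n.+1.
Proof. by rewrite /Fpoly size_addl ?size_polyXn // ltnS size_low. Qed.

Lemma horner_Fpoly t : Fpoly.[t] = f_at t.
Proof.
rewrite /Fpoly /f_at hornerD hornerXn horner_sum; congr (_ + _).
by apply: eq_bigr => i _; rewrite hornerZ hornerXn.
Qed.

Lemma coef_Fpoly (i : 'I_n) : Fpoly`_i = var_a i.
Proof.
rewrite /Fpoly coefD coefXn ltn_eqF // add0r coef_sum.
rewrite (bigD1 i) //= coefZ coefXn eqxx mulr1 big1 ?addr0 // => j hj.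
by rewrite coefZ coefXn eq_sym (inj_eq val_inj) (negbTE hj) mulr0.
Qed.

Lemma stepA : exists kR : {poly RR}, [/\ kR \is monic, size kR = d.+1 &
  forall i : 'I_n, J (var_a i -
     ((('X - x%:P) * ('X - y%:P) * ('X - midR%:P)) * kR)`_i)].
Proof.
have [q1 [m1 s1 e1]] := divstep x Fpoly_monic size_Fpoly.
have [q2 [m2 s2 e2]] := divstep y m1 s1.
have [kR [m3 s3 e3]] := divstep midR m2 s2.
exists kR; split => //.
set cx := Fpoly.[x] in e1; set c1 := q1.[y] in e2; set c2 := q2.[midR] in e3.
have Jx : J cx by rewrite /cx horner_Fpoly; exact: (Jg (gens n) (0 : 'I_4)).
have Jy : J (Fpoly.[y]) by rewrite horner_Fpoly; exact: (Jg (gens n) (1 : 'I_4)).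
have Jm : J (Fpoly.[midR]) by rewrite horner_Fpoly; exact: (Jg (gens n) (2 : 'I_4)).
have Jw : J (w * (x - y) - 1) by exact: (Jg (gens n) (3 : 'I_4)).
have hy : Fpoly.[y] = c1 * (y - x) + cx.
  by rewrite {1}e1 !hornerE.
have J1 : J c1.
  have -> : c1 = - (c1 * (w * (x - y) - 1)) - w * (c1 * (y - x) + cx) + w * cx by ring.
  apply: JD; last exact: JMl.
  by apply: JB; [apply: JN; apply: JMl | apply: JMl; rewrite -hy].
have hm : Fpoly.[midR] = (c2 * (midR - y) + c1) * (midR - x) + cx.
  rewrite {1}e1 hornerD hornerC hornerM hornerXsubC. congr (_ * _ + _).
  rewrite e2 hornerD hornerC hornerM hornerXsubC. reflexivity.
have h2m : 2%:R * midR = x + y.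
  rewrite /midR -mul_mpolyC mulrA -mpolyC_nat -mpolyCM mulfV ?mul1r //.
have ex : (x - y) ^+ 2 = - (2%:R * 2%:R) * ((midR - y) * (midR - x)).
  have -> : - (2%:R * 2%:R) * ((midR - y) * (midR - x)) =
    - ((2%:R * midR - 2%:R * y) * (2%:R * midR - 2%:R * x)) by ring.
  rewrite h2m; ring.
have J2' : J (c2 * (x - y) ^+ 2).
  have -> : c2 * (x - y) ^+ 2 = - (2%:R * 2%:R) * (Fpoly.[midR] - cx - c1 * (midR - x)).
    rewrite hm ex; ring.
  apply: JMl; apply: JB; [apply: JB; [exact: Jm | exact: Jx] | apply: JMr; exact: J1].
have J2 : J c2.
  have -> : c2 = c2 * (x - y) ^+ 2 * w ^+ 2 - c2 * (w * (x - y) - 1) * (w * (x - y) + 1) by ring.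
  apply: JB; [apply: JMr; exact: J2' | apply: JMr; apply: JMl; exact: Jw].
move=> i; rewrite -coef_Fpoly -coefB.
have -> : Fpoly - ('X - x%:P) * ('X - y%:P) * ('X - midR%:P) * kR =
   c2%:P * (('X - y%:P) * ('X - x%:P)) + c1%:P * ('X - x%:P) + cx%:P.
  rewrite {1}e1 e2 e3; ring.
rewrite !coefD !coefCM coefC.
apply: JD; [apply: JD; apply: JMr; [exact: J2 | exact: J1] |].
case: (_ == _); [exact: Jx | exact: J0].
Qed.
End StepA.

Lemma signsq (R : comRingType) k : (-1) ^+ k * (-1) ^+ k = 1 :> R.
Proof. by rewrite -expr2 sqrr_sign. Qed.

Lemma nth_Xenum (R : comRingType) d (j : 'I_d) x0 :
  nth x0 [seq 'X_j | j <- enum 'I_d] j = 'X_j :> {mpoly R[d]}.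
Proof.
by rewrite (nth_map j) ?nth_ord_enum // size_enum_ord ltn_ord.
Qed.

Lemma prod0 (R : comRingType) (I : finType) (P : pred I) (F : I -> R) i :
  P i -> F i = 0 -> \prod_(j | P j) F j = 0.
Proof. by move=> Pi Fi; rewrite (bigD1 i) //= Fi mul0r. Qed.

Lemma Viete_coef (R : idomainType) k (z : 'I_k -> R) i : (i <= k)%N ->
  (\prod_(j < k) ('X - (z j)%:P))`_i = (-1)^+(k-i) * (mesym k R (k-i)).@[z].
Proof.
move=> hi.
have hk : (k - i < k.+1)%N by rewrite ltnS leq_subr.
have := mroots_coeff [tuple z j | j < k] (Ordinal hk).
rewrite (_ : (k - Ordinal hk)%N = i); last exact: subKn.
rewrite big_tuple => H.
rewrite (eq_bigr (fun j => 'X - (tnth [tuple z j | j < k] j)%:P)); last first.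
  by move=> j _; rewrite tnth_mktuple.
rewrite H; congr (_ * _).
by apply: meval_eq => j; rewrite tnth_mktuple.
Qed.

Lemma map_cub (R S : comNzRingType) (f : {rmorphism R -> S}) a b c :
  map_poly f (('X - a%:P) * ('X - b%:P) * ('X - c%:P)) =
  ('X - (f a)%:P) * ('X - (f b)%:P) * ('X - (f c)%:P).
Proof. by rewrite !rmorphM /= !map_polyXsubC. Qed.

Lemma mul4A (R : comRingType) (a b c e : R) : a * (b * (c * e)) = a * b * c * e.
Proof. by rewrite !mulrA. Qed.

Section PartC.
Variables (R0 : idomainType) (iota : {rmorphism rat -> R0}) (a0 a1 : R0) (d : nat).
Local Notation n := d.+3.
Local Notation G := {mpoly R0[d]}.
Definition cG : {rmorphism rat -> G} := (@mpolyC d R0) \o iota.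
Definition u0 : G := a0%:MP.
Definition u1 : G := a1%:MP.
Definition mid : G := cG (2%:R)^-1 * (u0 + u1).
Definition rho (i : 'I_n) : G := nth 0 [:: u0, u1, mid & [seq 'X_j | j <- enum 'I_d]] i.
Definition psi := mmap cG rho.
Definition Stup := [tuple mesym d R0 i.+1 | i < d].
Local Notation chi := (comp_mpoly Stup).
Definition gam (i : nat) : G := (-1) ^+ (d - i) * nth 1 (1 :: [seq 'X_j | j <- enum 'I_d]) (d - i).
Definition kgen : {poly G} := \poly_(i < d.+1) gam i.
Definition cubG : {poly G} := ('X - u0%:P) * ('X - u1%:P) * ('X - mid%:P).
Definition Acoef (i : 'I_n) : G := (cubG * kgen)`_i.
Definition Kr : {poly G} := \prod_(j < d) ('X - ('X_j)%:P).

Lemma i1P : (1 < n)%N. Proof. by []. Qed.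
Lemma i2P : (2 < n)%N. Proof. by []. Qed.

Lemma half2 : cG 2%:R * cG (2%:R)^-1 = 1.
Proof. by rewrite -rmorphM mulfV // rmorph1. Qed.

Lemma psi_D2roots : psi (D2roots n) = 0.
Proof.
rewrite /D2roots /psi rmorph_prod.
apply: (@prod0 _ _ _ _ ord0); first by [].
rewrite rmorph_prod; apply: (@prod0 _ _ _ _ (Ordinal i1P)); first by [].
rewrite rmorph_prod; apply: (@prod0 _ _ _ _ (Ordinal i2P)); first by [].
rewrite /psi !rmorphB /= mmapZ !mmapX !mmap1U /rho /= /mid mulrA half2 mul1r.
by rewrite addrAC addrK subrr.
Qed.

Lemma chi_gam i : (i <= d)%N -> chi (gam i) = (-1)^+(d-i) * mesym d R0 (d - i).
Proof.
move=> hi; rewrite /gam rmorphM rmorph_sign; congr (_ * _).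
case hk: (d - i)%N => [|k] /=; first by rewrite rmorph1 mesym0E.
have kd : (k < d)%N by have := leq_subr i d; rewrite hk.
by rewrite (nth_Xenum (Ordinal kd)) /= comp_mpolyXU -tnth_nth tnth_mktuple.
Qed.

Lemma mesym_id k : (mesym d G k).@[fun j => 'X_j] = mesym d R0 k.
Proof.
rewrite /meval (mmap_mesym _ (@mpolyC d R0)).
rewrite -[RHS](comp_mpoly_id (mesym d R0 k)).
by apply: mmap_ext => // j; rewrite tnth_mktuple.
Qed.

Lemma Kr_coef i : (i <= d)%N -> Kr`_i = (-1)^+(d-i) * mesym d R0 (d-i).
Proof.
move=> hi; rewrite /Kr Viete_coef //; congr (_ * _).
exact: mesym_id.
Qed.

Lemma size_Kr : size Kr = d.+1.
Proof.
rewrite /Kr size_prod_XsubC -(filter_predT (index_enum _)).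
by rewrite deprecated_filter_index_enum -cardE card_ord.
Qed.

Lemma Kr_map : map_poly chi kgen = Kr.
Proof.
apply/polyP => i; rewrite coef_map /= coef_poly.
case: ltnP => hi.
  by rewrite chi_gam // Kr_coef.
by rewrite comp_mpoly0 nth_default // size_Kr.
Qed.

Lemma chi_cG c : chi (cG c) = cG c.
Proof. exact: comp_mpolyC. Qed.

Lemma cub_map : map_poly chi cubG = cubG.
Proof.
have e0 : chi u0 = u0 := comp_mpolyC _ _.
have e1 : chi u1 = u1 := comp_mpolyC _ _.
have e2 : chi mid = mid.
  by rewrite /mid rmorphM rmorphD /= comp_mpolyC e0 e1.
rewrite /cubG map_cub /= e0 e1 e2. reflexivity.
Qed.

Lemma rho_split : \prod_(i < n) ('X - (rho i)%:P) = cubG * Kr.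
Proof.
have r0 : rho ord0 = u0 by reflexivity.
have r1 : rho (lift ord0 ord0) = u1 by reflexivity.
have r2 : rho (lift ord0 (lift ord0 ord0)) = mid by reflexivity.
have r3 j : rho (lift ord0 (lift ord0 (lift ord0 j))) = 'X_j.
  by rewrite /rho; change (nth 0 [seq ('X_j : G) | j <- enum 'I_d] j = 'X_j); rewrite nth_Xenum.
rewrite big_ord_recl. rewrite big_ord_recl. rewrite big_ord_recl. rewrite r0 r1 r2 mul4A.
rewrite (eq_bigr (fun j => 'X - ('X_j)%:P)); last by move=> j _; rewrite r3.
reflexivity.
Qed.

Definition sigt := [tuple ((-1) ^+ (n - i) *: mesym n rat (n - i)) | i < n].

Lemma psi_sigma (i : 'I_n) : psi (tnth sigt i) = chi (Acoef i).
Proof.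
rewrite tnth_mktuple /psi mmapZ rmorph_sign (mmap_mesym _ (@idfun G)).
rewrite -Viete_coef; last exact: ltnW (ltn_ord i).
rewrite rho_split /Acoef.
have e : map_poly chi (cubG * kgen) = cubG * Kr by rewrite rmorphM /= cub_map Kr_map.
by rewrite -e coef_map.
Qed.

Lemma E0 (D2 : {mpoly rat[n]}) : vieta D2 = D2roots n -> mmap cG Acoef D2 = 0.
Proof.
move=> hv; apply: msym_fundamental_un0.
have L : chi (mmap cG Acoef D2) = mmap cG (fun i => chi (Acoef i)) D2.
  rewrite (mmap_rmorph cG Acoef (comp_mpoly Stup)).
  by apply: mmap_ext => [c|i] //=; rewrite chi_cG.
have Rr : psi (vieta D2) = mmap cG (fun i => chi (Acoef i)) D2.
  rewrite /vieta /comp_mpoly /psi (mmap_rmorph (@mpolyC n rat) _ (mmap cG rho)).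
  apply: mmap_ext => [c|i] /=; first by rewrite /psi mmapC.
  exact: psi_sigma.
by rewrite L -Rr hv psi_D2roots.
Qed.

Section Phi.
Variable k : {poly R0}.
Hypothesis km : k \is monic.
Hypothesis ks : size k = d.+1.
Definition hPhi (j : 'I_d) : R0 := (-1) ^+ j.+1 * k`_(d - j.+1).
Local Notation Phi := (meval hPhi).

Lemma Phi_gam i : (i <= d)%N -> Phi (gam i) = k`_i.
Proof.
move=> hi; rewrite /gam rmorphM rmorph_sign.
case hk: (d - i)%N => [|j] /=.
  have -> : i = d by apply/eqP; rewrite eqn_leq hi /= -subn_eq0 hk.
  by rewrite rmorph1 expr0 mul1r -[d]/(d.+1.-1) -ks -lead_coefE (monicP km).
have jd : (j < d)%N by have := leq_subr i d; rewrite hk.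
rewrite (nth_Xenum (Ordinal jd)) mevalXU /hPhi /=.
have -> : (d - j.+1)%N = i by rewrite -hk subKn.
by rewrite mulrA signsq mul1r.
Qed.

Lemma Phi_kgen : map_poly Phi kgen = k.
Proof.
apply/polyP => i; rewrite coef_map /= coef_poly.
case: ltnP => hi; first by rewrite Phi_gam.
by rewrite meval0 nth_default // ks.
Qed.

Lemma Phi_cG c : Phi (cG c) = iota c.
Proof. exact: mevalC. Qed.

Lemma Phi_cub : map_poly Phi cubG =
  ('X - a0%:P) * ('X - a1%:P) * ('X - (iota (2%:R)^-1 * (a0 + a1))%:P).
Proof.
rewrite /cubG map_cub /= /u0 /u1 /mid !mevalC rmorphM rmorphD /= !mevalC.
reflexivity.
Qed.
End Phi.

Theorem keyC (D2 : {mpoly rat[n]}) (k : {poly R0}) :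
  vieta D2 = D2roots n -> k \is monic -> size k = d.+1 ->
  mmap iota (fun i : 'I_n =>
    ((('X - a0%:P) * ('X - a1%:P) * ('X - (iota (2%:R)^-1 * (a0 + a1))%:P)) * k)`_i) D2 = 0.
Proof.
move=> hv km ks.
have := congr1 (meval (hPhi k)) (E0 hv).
rewrite meval0 /meval (mmap_rmorph cG Acoef (mmap idfun (hPhi k))) => H.
apply: (etrans _ H).
apply: mmap_ext => [c|i] /=; first by rewrite mmapC.
rewrite /Acoef.
have e : map_poly (meval (hPhi k)) (cubG * kgen) =
  ('X - a0%:P) * ('X - a1%:P) * ('X - (iota (2%:R)^-1 * (a0 + a1))%:P) * k.
  by rewrite rmorphM /= Phi_cub Phi_kgen.
by rewrite -e coef_map.
Qed.
End PartC.

Section Sym.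
Variables (R : comNzRingType) (n : nat).
Local Notation P := {mpoly R[n]}.

Definition D2g : P := \prod_(i < n) \prod_(j < n | (i < j)%N)
     \prod_(k < n | (k != i) && (k != j)) (2%:R *: 'X_k - 'X_i - 'X_j).

Definition FF (h : {set 'I_n}) (k : 'I_n) : P := 2%:R *: 'X_k - \sum_(l in h) 'X_l.
Definition PS : P := \prod_(h : {set 'I_n} | #|h| == 2) \prod_(k | k \notin h) FF h k.

Lemma msymXU (s : 'S_n) i : msym s ('X_i : P) = 'X_(s i).
Proof.
rewrite msymX; congr 'X_[_]; apply/mnmP => j; rewrite mnmE !mnm1E.
congr (nat_of_bool _); apply/eqP/eqP => [->|<-]; by rewrite ?permKV ?permK.
Qed.

Lemma PS_perm (s : 'S_n) :
  \prod_(h : {set 'I_n} | #|h| == 2) \prod_(k | k \notin h)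
     (2%:R *: 'X_(s k) - \sum_(l in h) 'X_(s l)) = PS.
Proof.
rewrite /PS [RHS](reindex_inj (imset_inj (@perm_inj _ s))) /=.
apply: eq_big => [h|h _]; first by rewrite card_imset //; apply: perm_inj.
rewrite [RHS](reindex_inj (@perm_inj _ s)) /=.
apply: eq_big => [k|k _]; first by rewrite mem_imset //; apply: perm_inj.
rewrite /FF big_imset //; move=> x y _ _; apply: perm_inj.
Qed.

Lemma PS_sym : PS \is symmetric.
Proof.
apply/issymP => s; rewrite -{2}(PS_perm s) /PS rmorph_prod /=.
apply: eq_bigr => h _; rewrite rmorph_prod /=; apply: eq_bigr => k _.
rewrite /FF rmorphB /= msymZ msymXU rmorph_sum /=; congr (_ - _).
by apply: eq_bigr => l _; rewrite msymXU.
Qed.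

Definition pset (p : 'I_n * 'I_n) : {set 'I_n} := [set p.1; p.2].
Definition Apairs : {set 'I_n * 'I_n} := [set p : 'I_n * 'I_n | (p.1 < p.2)%N].

Lemma pset_inj : {in Apairs &, injective pset}.
Proof.
move=> [a b] [c e]; rewrite !inE /pset /= => ab ce E.
have ha : a \in [set c; e] by rewrite -E !inE eqxx.
have hb : b \in [set c; e] by rewrite -E !inE eqxx orbT.
have hc : c \in [set a; b] by rewrite E !inE eqxx.
move: ha hb hc; rewrite !inE => /orP[] /eqP ha /orP[] /eqP hb /orP[] /eqP hc;
  subst => //.
all: try by rewrite ltnn in ab.
all: try by rewrite ltnn in ce.
all: try by move: (ltn_trans ab ce); rewrite ltnn.
all: by move: (ltn_trans ce ab); rewrite ltnn.
Qed.

Lemma card2_im : [set h : {set 'I_n} | #|h| == 2] = pset @: Apairs.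
Proof.
apply/setP => h; rewrite inE; apply/idP/imsetP.
  case/cards2P => x [y [xy ->]].
  case: (ltngtP x y) => [lt|gt|eq].
  - by exists (x, y); rewrite ?inE.
  - by exists (y, x); rewrite ?inE // /pset setUC.
  - by move: xy; rewrite (val_inj eq) eqxx.
case=> [[a b]]; rewrite inE /= => ab ->.
have nab : a != b by rewrite -(inj_eq val_inj) /= neq_ltn ab.
by rewrite /pset cards2 nab.
Qed.

Lemma D2g_PS : D2g = PS.
Proof.
rewrite /D2g /PS pair_big_dep /=.
rewrite (eq_bigl (fun h => h \in [set h : {set 'I_n} | #|h| == 2])); last first.
  by move=> h; rewrite inE.
rewrite card2_im big_imset /=; last exact: pset_inj.
apply: eq_big => [p|[a b] /= ab]; first by rewrite inE.
have nab : a \notin [set b] by rewrite inE -(inj_eq val_inj) /= neq_ltn ab.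
apply: eq_big => [k|k _]; first by rewrite !inE negb_or.
by rewrite /FF /pset big_setU1 //= big_set1 opprD addrA.
Qed.
End Sym.

Lemma exists_vieta (R : comNzRingType) n (p : {mpoly R[n]}) : p \is symmetric ->
  exists D : {mpoly R[n]},
    D \mPo [tuple ((-1) ^+ (n - i) *: mesym n R (n - i)) | i < n] = p.
Proof.
case/sym_fundamental => t [ht _].
exists (t \mPo [tuple ((-1) ^+ i.+1 *: 'X_(rev_ord i)) | i < n]).
rewrite -ht {2}/comp_mpoly (mmap_rmorph _ _
  (comp_mpoly [tuple ((-1) ^+ (n - i) *: mesym n R (n - i)) | i < n])).
apply: mmap_ext => [c|i] /=; first by rewrite comp_mpolyC.
rewrite !tnth_mktuple comp_mpolyZ /comp_mpoly mmapX mmap1U tnth_mktuple.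
rewrite scalerA /= subKn // signsq scale1r.
by [].
Qed.

Lemma part2 d (D2 : {mpoly rat[d.+3]}) : vieta D2 = D2roots d.+3 ->
  in_ideal (gens d.+3) (embed_a D2).
Proof.
move=> hv.
have [kR [km ks hJ]] := stepA d.
have K := keyC (@mpolyC (d.+3 + 3) rat) (var_x d.+3) (var_y d.+3) hv km ks.
have hm : (@mpolyC (d.+3 + 3) rat (2%:R)^-1) * (var_x d.+3 + var_y d.+3) = midR d.
  by rewrite /midR mul_mpolyC.
rewrite hm in K.
have := Jc_mmap (@mpolyC (d.+3 + 3) rat) D2 hJ.
rewrite /Jc K subr0 => H.
apply: Jeq H.
rewrite /embed_a /comp_mpoly; apply: mmap_ext => // i.
by rewrite tnth_mktuple.
Qed.

Theorem corollary2 (n : nat) (hn : (3 <= n)%N) :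
  (exists D2 : {mpoly rat[n]}, vieta D2 = D2roots n) /\
  (forall D2 : {mpoly rat[n]}, vieta D2 = D2roots n ->
     in_ideal (gens n) (embed_a D2)).
Proof.
case: n hn => [|[|[|d]]] // hn; split; last exact: part2.
have hs : D2roots d.+3 \is symmetric.
  have -> : D2roots d.+3 = D2g rat d.+3 by reflexivity.
  rewrite D2g_PS; exact: PS_sym.
have [D hD] := exists_vieta hs.
by exists D.
Qed.
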